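(* Let $T:\mathbb{Z}\to\mathbb{Z}$ be defined by $T(n)=n/2$ if $n$ is even and $T(n)=(3n+1)/2$ if $n$ is odd. Let $[2]_3$ denote the set of integers congruent to $2 \pmod 3$, and define $F:[2]_3\to[2]_3$ by $F(n)=T(n)$ if $n\equiv 5\pmod 6$ and $F(n)=T(T(n))$ if $n\equiv 2\pmod 6$. Then the $3x+1$ conjecture holds if and only if for every positive integer $n\in[2]_3$ the $F$-trajectory of $n$ eventually reaches $2$ (i.e., $F^k(n)=2$ for some $k\ge 0$).
   Context: The $3x+1$ conjecture is the statement: for every positive integer $n$, the $T$-trajectory $(T^k(n))_{k\ge0}$ eventually reaches the cycle $(2,1)$, i.e., $T^k(n)=1$ for some $k\ge 0$. Iterates are defined by $f^0(n)=n$, $f^{k+1}(n)=f(f^k(n))$. *)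

(* Defs.v *)
From Stdlib Require Import ZArith.
Open Scope Z_scope.

Definition T (n : Z) : Z :=
  if Z.even n then n / 2 else (3 * n + 1) / 2.

Fixpoint iterZ (f : Z -> Z) (k : nat) (n : Z) : Z :=
  match k with
  | O => n
  | S k' => f (iterZ f k' n)
  end.

(* F on [2]_3 : F(n) = T(n) if n = 5 mod 6, T(T(n)) if n = 2 mod 6.
   Totalised on Z (values outside [2]_3 are never used in the statement,
   since F maps [2]_3 into [2]_3). *)
Definition F (n : Z) : Z :=
  if Z.eqb (n mod 6) 5 then T n else T (T n).

Definition collatz_conjecture : Prop :=
  forall n : Z, 0 < n -> exists k : nat, iterZ T k n = 1.

(* Main.v *)
Require Import Defs.
From Stdlib Require Import ZArith Lia Arith Wf_nat.
Open Scope Z_scope.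

Lemma iter_S' f k n : iterZ f (S k) n = iterZ f k (f n).
Proof. induction k as [|k IH]; simpl in *; auto. rewrite <- IH. reflexivity. Qed.

Lemma T_spec n : (n mod 2 = 0 /\ 2 * T n = n) \/ (n mod 2 = 1 /\ 2 * T n = 3 * n + 1).
Proof.
  unfold T. destruct (Z.even n) eqn:E.
  - left. apply Z.even_spec in E. destruct E as [m ->].
    rewrite (Z.mul_comm 2 m), Z.div_mul by (Z.to_euclidean_division_equations; lia). (Z.to_euclidean_division_equations; lia).
  - right. assert (Z.odd n = true) as O by (rewrite <- Z.negb_even, E; reflexivity).
    apply Z.odd_spec in O. destruct O as [m ->].
    replace (3 * (2 * m + 1) + 1) with ((3*m+2)*2) by ring.
    rewrite Z.div_mul by (Z.to_euclidean_division_equations; lia). (Z.to_euclidean_division_equations; lia).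
Qed.

Lemma F_spec n : (n mod 6 = 5 /\ F n = T n) \/ (n mod 6 <> 5 /\ F n = T (T n)).
Proof. unfold F. destruct (Z.eqb_spec (n mod 6) 5); auto. Qed.

Lemma fwd : forall t n, n mod 3 = 2 -> iterZ T t n = 2 -> exists k, iterZ F k n = 2.
Proof.
  intro t; induction t as [t IH] using (well_founded_induction lt_wf).
  intros n Hn Ht. destruct t as [|t].
  - exists O. simpl in *. exact Ht.
  - destruct (F_spec n) as [[H6 HF]|[H6 HF]].
    + rewrite iter_S' in Ht.
      assert (T n mod 3 = 2) by (destruct (T_spec n); (Z.to_euclidean_division_equations; lia)).
      destruct (IH t ltac:((Z.to_euclidean_division_equations; lia)) (T n) H Ht) as [k Hk].
      exists (S k). rewrite iter_S', HF. exact Hk.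
    + destruct t as [|t].
      * simpl in Ht. destruct (T_spec n); (Z.to_euclidean_division_equations; lia).
      * rewrite !iter_S' in Ht.
        assert (T (T n) mod 3 = 2) by (destruct (T_spec n); destruct (T_spec (T n)); (Z.to_euclidean_division_equations; lia)).
        destruct (IH t ltac:((Z.to_euclidean_division_equations; lia)) (T (T n)) H Ht) as [k Hk].
        exists (S k). rewrite iter_S', HF. exact Hk.
Qed.

Lemma F_T : forall k m, iterZ F k m = 2 -> exists j, iterZ T j m = 2.
Proof.
  induction k as [|k IH]; intros m H.
  - exists O; exact H.
  - rewrite iter_S' in H. destruct (IH _ H) as [j Hj].
    destruct (F_spec m) as [[_ HF]|[_ HF]]; rewrite HF in Hj.
    + exists (S j). rewrite iter_S'. exact Hj.
    + exists (S (S j)). rewrite !iter_S'. exact Hj.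
Qed.

Theorem lemma1 :
  collatz_conjecture <->
  (forall n : Z, 0 < n -> n mod 3 = 2 -> exists k : nat, iterZ F k n = 2).
Proof.
  split.
  - intros C n Hp H3. destruct (C n Hp) as [k Hk].
    destruct k as [|k].
    + simpl in Hk. (Z.to_euclidean_division_equations; lia).
    + simpl in Hk. apply (fwd k n H3).
      destruct (T_spec (iterZ T k n)); (Z.to_euclidean_division_equations; lia).
  - intros H. unfold collatz_conjecture.
    assert (R : forall m, 0 < m -> m mod 3 = 2 -> exists k, iterZ T k m = 1).
    { intros m Hm H3. destruct (H m Hm H3) as [k Hk].
      destruct (F_T k m Hk) as [j Hj]. exists (S j). simpl. rewrite Hj. reflexivity. }
    assert (G : forall N : nat, forall n, 0 < n -> (Z.to_nat n <= N)%nat -> exists k, iterZ T k n = 1).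
    { induction N as [|N IH]; intros n Hp HN.
      - (Z.to_euclidean_division_equations; lia).
      - destruct (Z.eq_dec n 1) as [->|H1]. { exists O; reflexivity. }
        destruct (Z.eq_dec (n mod 3) 2) as [H3|H3]. { apply R; auto. }
        destruct (T_spec n) as [[He HT]|[Ho HT]].
        + destruct (IH (T n) ltac:((Z.to_euclidean_division_equations; lia)) ltac:((Z.to_euclidean_division_equations; lia))) as [k Hk].
          exists (S k). rewrite iter_S'. exact Hk.
        + destruct (R (T n) ltac:((Z.to_euclidean_division_equations; lia)) ltac:((Z.to_euclidean_division_equations; lia))) as [k Hk].
          exists (S k). rewrite iter_S'. exact Hk. }
    intros n Hn. exact (G (Z.to_nat n) n Hn (le_n _)).
Qed.
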